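(* Consider a deterministic MDP with finite state space $\mathcal{S}$, finite action space $\mathcal{A}$, deterministic transition $f$, reward $r$, initial state distribution $\mu$, and KL-regularization coefficient $\beta>0$. Let $\pi_{\mathrm{ref}}$ be a reference policy with $\pi_{\mathrm{ref}}(a|s)>0$ for all $s\in\mathcal{S},a\in\mathcal{A}$. Let $\nu_{\mathcal{S}}\in\Delta(\mathcal{S})$ and, for each $s$, $\nu_{\mathcal{A}}(\cdot|s)\in\Delta(\mathcal{A})$ be exploratory, i.e. $\nu_{\mathcal{S}}(s)>0$ and $\nu_{\mathcal{A}}(a|s)>0$ for all $s,a$. Let $\pi^+$ be the solution of $$\min_{\pi\in\Pi}\ \frac12\,\mathbb{E}_{s\sim\nu_{\mathcal{S}}}\mathbb{E}_{a\sim\nu_{\mathcal{A}}(\cdot|s)}\left[\left(\frac1\beta A^{\pi_{\mathrm{ref}}}(s,a)-\log\frac{\pi(a|s)}{\pi_{\mathrm{ref}}(a|s)}\right)^2\right],$$ where $\Pi$ is the set of all policies. Then for every state $s\in\mathcal{S}$ there exists a function $\lambda_s:\Delta(\mathcal{A})\to[0,+\infty)$ such that $$V_\beta^{\pi^+}(\mu)-V_\beta^{\pi_{\mathrm{ref}}}(\mu)\ \ge\ \mathbb{E}_\mu^{\pi^+}\big[\lambda_s(\nu_{\mathcal{A}}(\cdot|s))\big]\ \ge\ 0,$$ and equality holds if and only if $\pi_{\mathrm{ref}}=\pi^*_\beta$.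
   Context: The MDP is deterministic: $s_{t+1}=f(s_t,a_t)$, episodes terminate after a finite (possibly random) number $T$ of steps at a terminal state, and the reward is nonzero only on reaching a terminal state. A policy $\pi$ assigns to each state a distribution $\pi(\cdot|s)\in\Delta(\mathcal{A})$. Unregularized value: $V^\pi(s)=\mathbb{E}[\sum_{t=0}^{T-1} r(s_t,a_t)\mid s_0=s]$ with $a_t\sim\pi(\cdot|s_t)$; $Q^\pi(s,a)=r(s,a)+V^\pi(f(s,a))$; advantage $A^\pi(s,a)=Q^\pi(s,a)-V^\pi(s)$. KL-regularized value: $V_\beta^\pi(s)=\mathbb{E}\big[\sum_{t=0}^{T-1}\big(r(s_t,a_t)-\beta\log\frac{\pi(a_t|s_t)}{\pi_{\mathrm{ref}}(a_t|s_t)}\big)\mid s_0=s\big]$, and $V_\beta^\pi(\mu)=\mathbb{E}_{s\sim\mu}V_\beta^\pi(s)$. $\pi^*_\beta$ denotes the optimal policy maximizing $V_\beta^\pi$. For a function $g$ of states, $\mathbb{E}_\mu^\pi[g(s)]$ denotes $\mathbb{E}[\sum_{t=0}^{T-1} g(s_t)]$ over trajectories with $s_0\sim\mu$, $a_t\sim\pi(\cdot|s_t)$, $s_{t+1}=f(s_t,a_t)$ (the expectation over states visited by $\pi$ from $\mu$). *)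

(* Defs.v *)
From HB Require Import structures.
From mathcomp Require Import all_boot all_order all_algebra.
From mathcomp Require Import all_classical all_reals all_analysis.
Set Implicit Arguments. Unset Strict Implicit. Unset Printing Implicit Defensive.
Import Order.TTheory GRing.Theory Num.Theory.
Local Open Scope ring_scope.

Section DetMDP.
Variables (R : realType) (S A : finType).

Definition is_dist (T : finType) (p : T -> R) : Prop :=
  (forall x, 0 <= p x) /\ \sum_(x : T) p x = 1.

(* a (stochastic, Markov) policy: pi s a = pi(a|s) *)
Definition is_policy (pi : S -> A -> R) : Prop := forall s, is_dist (pi s).

Variables (term : pred S) (f : S -> A -> S).

(* Expected accumulated per-step quantity g(s_t,a_t) along the trajectory
   of pi from s, stopped at the first terminal state, truncated after n steps:
   E[ sum_{t=0}^{min(T,n)-1} g(s_t,a_t) | s_0 = s ]. *)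
Fixpoint traj_sum (g : S -> A -> R) (pi : S -> A -> R) (n : nat) (s : S) : R :=
  match n with
  | 0 => 0
  | n'.+1 => if term s then 0
             else \sum_(a : A) pi s a * (g s a + traj_sum g pi n' (f s a))
  end.

(* Horizon: under the termination hypothesis (a strictly decreasing rank on
   non-terminal states) every episode ends within #|S| steps, so this is the
   full (untruncated) sum up to the termination time T. *)
Definition horizon : nat := #|S|.

Definition V (r : S -> A -> R) (pi : S -> A -> R) (s : S) : R :=
  traj_sum r pi horizon s.

Definition Qf (r : S -> A -> R) (pi : S -> A -> R) (s : S) (a : A) : R :=
  r s a + V r pi (f s a).
Definition Adv (r : S -> A -> R) (pi : S -> A -> R) (s : S) (a : A) : R :=
  Qf r pi s a - V r pi s.

Definition Vreg (r : S -> A -> R) (beta : R) (piref pi : S -> A -> R) (s : S) : R :=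
  traj_sum (fun s a => r s a - beta * ln (pi s a / piref s a)) pi horizon s.

Definition Vreg_mu (r : S -> A -> R) (beta : R) (piref pi : S -> A -> R)
  (mu : S -> R) : R :=
  \sum_(s : S) mu s * Vreg r beta piref pi s.

(* E_mu^pi[g(s)] = E[ sum_{t=0}^{T-1} g(s_t) ], s_0 ~ mu, a_t ~ pi *)
Definition occ_exp (pi : S -> A -> R) (mu : S -> R) (g : S -> R) : R :=
  \sum_(s : S) mu s * traj_sum (fun s _ => g s) pi horizon s.

Definition loss (r : S -> A -> R) (beta : R) (piref : S -> A -> R)
  (nuS : S -> R) (nuA : S -> A -> R) (pi : S -> A -> R) : R :=
  2^-1 * \sum_(s : S) nuS s * \sum_(a : A) nuA s a *
     (beta^-1 * Adv r piref s a - ln (pi s a / piref s a)) ^+ 2.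

Definition is_optimal (r : S -> A -> R) (beta : R) (piref : S -> A -> R)
  (mu : S -> R) (pi : S -> A -> R) : Prop :=
  is_policy pi /\
  forall pi', is_policy pi' -> Vreg_mu r beta piref pi' mu <= Vreg_mu r beta piref pi mu.

End DetMDP.

(* Main.v *)
Require Import Defs.
From HB Require Import structures.
From mathcomp Require Import all_boot all_order all_algebra.
From mathcomp Require Import all_classical all_reals all_analysis.
From mathcomp Require Import ring lra.
Import Order.TTheory GRing.Theory Num.Theory.
Local Open Scope ring_scope.

Section Core.
Variable R : realType.

Lemma sum2 (I : finType) (a b : I) (F : I -> R) : a != b ->
  \sum_c F c = F a + F b + \sum_(c | (c != a) && (c != b)) F c.
Proof.
move=> ab; rewrite (bigD1 a) //= (bigD1 b) /=; last by rewrite eq_sym.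
by rewrite addrA.
Qed.

Lemma lnD (x y : R) : 0 < x -> 0 < y -> ln (x / y) = ln x - ln y.
Proof.
move=> hx hy; rewrite lnM ?posrE ?invr_gt0 // lnV ?posrE //.
Qed.

Lemma core (I : finType) (w p q y : I -> R) :
  (forall a, 0 < w a) -> (forall a, 0 < p a) -> (forall a, 0 < q a) ->
  \sum_a q a = 1 -> 1 <= \sum_a p a * expR (y a) ->
  (forall q', (forall a, 0 < q' a) -> \sum_a q' a = 1 ->
    \sum_a w a * (y a - ln (q a / p a)) ^+ 2 <=
    \sum_a w a * (y a - ln (q' a / p a)) ^+ 2) ->
  forall b, q b <= p b * expR (y b).
Proof.
move=> hw hp hq sq se hmin b; rewrite leNgt; apply/negP => hb.
pose e a := p a * expR (y a).
have he a : 0 < e a by rewrite mulr_gt0 ?expR_gt0.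
have [a ha] : exists a, q a < e a.
  case: (pselect (exists a, q a < e a)) => // /forallNP H; exfalso.
  have H' c : e c <= q c by rewrite leNgt; apply/negP => /(H c).
  have : \sum_c e c < \sum_c q c.
    rewrite (bigD1 b) //= [X in _ < X](bigD1 b) //=.
    by rewrite ltr_leD // ler_sum.
  by rewrite sq; apply/negP; rewrite -leNgt.
have ab : a != b.
  by apply/eqP => eab; move: ha hb; rewrite eab /e => h1 h2; lra.
pose eta := Order.min (q b - e b) (e a - q a).
have eta_gt0 : 0 < eta by rewrite lt_min; apply/andP; split; rewrite subr_gt0.
have eta1 : eta <= q b - e b by rewrite ge_min lexx.
have eta2 : eta <= e a - q a by rewrite ge_min lexx orbT.
pose q' c := if c == b then q b - eta else if c == a then q a + eta else q c.
have q'b : q' b = q b - eta by rewrite /q' eqxx.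
have q'a : q' a = q a + eta by rewrite /q' (negbTE ab) eqxx.
have q'c c : (c != a) && (c != b) -> q' c = q c.
  by case/andP => ca cb; rewrite /q' (negbTE ca) (negbTE cb).
have hq' c : 0 < q' c.
  rewrite /q'; case: ifP => _; first by have := he b; lra.
  by case: ifP => _ //; have := hq a; lra.
have sq' : \sum_c q' c = 1.
  rewrite -sq (sum2 _ _ _ _ ab) [RHS](sum2 _ _ _ _ ab) q'a q'b.
  rewrite (eq_bigr q); last by move=> c /q'c.
  lra.
have := hmin q' hq' sq'; apply/negP; rewrite -ltNge.
rewrite (sum2 _ _ _ _ ab) [X in _ < X](sum2 _ _ _ _ ab) q'a q'b.
rewrite (eq_bigr (fun c => w c * (y c - ln (q c / p c)) ^+ 2)); last first.
  by move=> c /q'c ->.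
have hpa := hp a; have hpb := hp b; have hqa := hq a; have hqb := hq b.
have hwa := hw a; have hwb := hw b; have hea := he a; have heb := he b.
have Hb : (y b - ln ((q b - eta) / p b)) ^+ 2 < (y b - ln (q b / p b)) ^+ 2.
  have h1 : y b <= ln ((q b - eta) / p b).
    rewrite -[y b]expRK ler_ln ?posrE ?expR_gt0 ?divr_gt0 //; last lra.
    by rewrite ler_pdivlMr // mulrC; rewrite /e in eta1; lra.
  have h2 : ln ((q b - eta) / p b) < ln (q b / p b).
    rewrite ltr_ln ?posrE ?divr_gt0 //; last lra.
    by rewrite ltr_pM2r ?invr_gt0 //; lra.
  rewrite !expr2; nra.
have Ha : (y a - ln ((q a + eta) / p a)) ^+ 2 <= (y a - ln (q a / p a)) ^+ 2.
  have h1 : ln ((q a + eta) / p a) <= y a.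
    rewrite -[y a]expRK ler_ln ?posrE ?expR_gt0 ?divr_gt0 //; last lra.
    by rewrite ler_pdivrMr // mulrC; rewrite /e in eta2; lra.
  have h2 : ln (q a / p a) <= ln ((q a + eta) / p a).
    rewrite ler_ln ?posrE ?divr_gt0 //; last lra.
    by rewrite ler_pM2r ?invr_gt0 //; lra.
  rewrite !expr2; nra.
have := ler_wpM2l (ltW hwa) Ha.
have : w b * (y b - ln ((q b - eta) / p b)) ^+ 2 < w b * (y b - ln (q b / p b)) ^+ 2.
  by rewrite ltr_pM2l.
lra.
Qed.
End Core.

Section MDP.
Variables (R : realType) (S A : finType) (term : pred S) (f : S -> A -> S)
  (rank : S -> nat).
Hypothesis hrank : forall s a, ~~ term s -> (rank (f s a) < rank s)%N.

Definition hh (s : S) := #|[set s' | (rank s' <= rank s)%N]|.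

Lemma hh_pos s : (0 < hh s)%N.
Proof. by apply/card_gt0P; exists s; rewrite inE. Qed.

Lemma hh_le s : (hh s <= horizon S)%N.
Proof. exact: max_card. Qed.

Lemma hh_dec s a : ~~ term s -> (hh (f s a) < hh s)%N.
Proof.
move=> ht; rewrite /hh.
have : [set s' | (rank s' <= rank (f s a))%N] \proper [set s' | (rank s' <= rank s)%N].
  apply/properP; split.
    apply/fintype.subsetP => x; rewrite !inE => H; apply: (leq_trans H).
    by apply: ltnW; apply: hrank.
  by exists s; rewrite !inE // -ltnNge hrank.
exact: proper_card.
Qed.

Lemma traj_stable (g pi : S -> A -> R) n m s :
  (hh s <= n)%N -> (hh s <= m)%N ->
  traj_sum term f g pi n s = traj_sum term f g pi m s.
Proof.
elim: n m s => [|n IH] [|m] s hn hm.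
- by have := hh_pos s; rewrite leqn0 in hn; rewrite (eqP hn).
- by have := hh_pos s; rewrite leqn0 in hn; rewrite (eqP hn).
- by have := hh_pos s; rewrite leqn0 in hm; rewrite (eqP hm).
rewrite /=; case: ifP => // ht.
apply: eq_bigr => a _; congr (_ * (_ + _)); apply: IH.
  by rewrite -ltnS (leq_trans (hh_dec s a (negbT ht))).
by rewrite -ltnS (leq_trans (hh_dec s a (negbT ht))).
Qed.

Lemma traj_term (g pi : S -> A -> R) s : term s ->
  traj_sum term f g pi (horizon S) s = 0.
Proof.
move=> ht; have := hh_le s; have := hh_pos s.
rewrite /horizon; case: #|S| => [|n] /=.
  by move=> h1 h2; have := leq_trans h1 h2.
by rewrite ht.
Qed.

Lemma traj_unfold (g pi : S -> A -> R) s : ~~ term s ->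
  traj_sum term f g pi (horizon S) s =
  \sum_a pi s a * (g s a + traj_sum term f g pi (horizon S) (f s a)).
Proof.
move=> ht; have := hh_le s; have := hh_pos s.
have hst : forall n a, (hh s <= n.+1)%N -> traj_sum term f g pi n (f s a) =
   traj_sum term f g pi (horizon S) (f s a).
  move=> n a hn; apply: traj_stable; last exact: hh_le.
  by rewrite -ltnS (leq_trans (hh_dec s a ht)).
rewrite /horizon in hst *; case E: #|S| => [|n] /=.
  by move=> h1 h2; have := leq_trans h1 h2.
move=> _ hn; rewrite (negbTE ht); apply: eq_bigr => a _.
by rewrite hst // E.
Qed.

Lemma traj_ge0 (g pi : S -> A -> R) n s :
  (forall s a, 0 <= g s a) -> (forall s a, 0 <= pi s a) ->
  0 <= traj_sum term f g pi n s.
Proof.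
move=> hg hpi; elim: n s => [|n IH] s //=; case: ifP => // _.
by apply: sumr_ge0 => a _; rewrite mulr_ge0 ?addr_ge0.
Qed.

End MDP.

Lemma gibbs (R : realType) (x q p : R) : 0 <= x -> 0 < q -> 0 < p ->
  x * (ln (q / p) - ln (x / p)) <= q - x.
Proof.
move=> hx hq hp; case: (eqVneq x 0) => [->|x0]; first by rewrite mul0r subr0 ltW.
have xp : 0 < x by rewrite lt0r x0.
have -> : ln (q / p) - ln (x / p) = ln (q / x) by rewrite !lnD //; lra.
have qx : 0 < q / x by rewrite divr_gt0.
have e : 1 + (q / x - 1) = q / x by lra.
have H := @le_ln1Dx R (q / x - 1) ltac:(lra); rewrite e in H.
rewrite -[leRHS](_ : x * (q / x - 1) = q - x); last first.
  by rewrite mulrBr mulr1 mulrC divfK // gt_eqF.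
by rewrite ler_pM2l.
Qed.

Section Main.
Variables (R : realType) (S A : finType) (term : pred S) (f : S -> A -> S)
  (r : S -> A -> R) (mu : S -> R) (beta : R) (piref nuA piplus : S -> A -> R)
  (nuS : S -> R) (rank : S -> nat).
Hypothesis hrank : forall s a, ~~ term s -> (rank (f s a) < rank s)%N.
Hypothesis hmu : is_dist mu.
Hypothesis hbeta : 0 < beta.
Hypothesis hpref : is_policy piref.
Hypothesis hpref_pos : forall s a, 0 < piref s a.
Hypothesis hnuS_pos : forall s, 0 < nuS s.
Hypothesis hnuA_pos : forall s a, 0 < nuA s a.
Hypothesis hplus : is_policy piplus.
Hypothesis hplus_pos : forall s a, 0 < piplus s a.
Hypothesis hmin : forall pi, is_policy pi -> (forall s a, 0 < pi s a) ->
     loss term f r beta piref nuS nuA piplus <= loss term f r beta piref nuS nuA pi.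

Definition V0 := V term f r piref.
Definition Ad := Adv term f r piref.
Definition cc s := \sum_a piplus s a * (Ad s a - beta * ln (piplus s a / piref s a)).
Definition lam s (p : A -> R) := if term s then 0 else cc s.
Definition gl := fun (s : S) (_ : A) => lam s (nuA s).
Definition gp := fun s a => r s a - beta * ln (piplus s a / piref s a).

Lemma V0_term s : term s -> V0 s = 0.
Proof. by move=> ht; rewrite /V0 /V traj_term. Qed.

Lemma V0_unf s : ~~ term s -> V0 s = \sum_a piref s a * (r s a + V0 (f s a)).
Proof. by move=> ht; rewrite /V0 /V (traj_unfold _ _ _ _ _ _ hrank). Qed.

Lemma sumAd s : ~~ term s -> \sum_a piref s a * Ad s a = 0.
Proof.
move=> ht; rewrite /Ad /Adv /Qf -/V0.
under eq_bigr do rewrite mulrBr.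
by rewrite sumrB -big_distrl /= (hpref s).2 mul1r -V0_unf // subrr.
Qed.

Lemma sumexp s : ~~ term s -> 1 <= \sum_a piref s a * expR (beta^-1 * Ad s a).
Proof.
move=> ht; apply: (@le_trans _ _ (\sum_a piref s a * (1 + beta^-1 * Ad s a))).
  under eq_bigr do rewrite mulrDr mulr1.
  rewrite big_split /= (hpref s).2.
  under eq_bigr do rewrite mulrCA.
  by rewrite -mulr_sumr sumAd // mulr0 addr0.
by apply: ler_sum => a _; rewrite ler_wpM2l ?expR_ge1Dx ?ltW.
Qed.


Lemma hloc s (q' : A -> R) : (forall a, 0 < q' a) -> \sum_a q' a = 1 ->
  \sum_a nuA s a * ((fun a => beta^-1 * Ad s a) a - ln (piplus s a / piref s a)) ^+ 2 <=
  \sum_a nuA s a * ((fun a => beta^-1 * Ad s a) a - ln (q' a / piref s a)) ^+ 2.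
Proof.
move=> hq' sq'.
pose pi' s' a := if s' == s then q' a else piplus s' a.
have hpol : is_policy pi'.
  move=> s'; rewrite /pi'; case: eqP => _; last exact: hplus.
  by split => // a; exact: ltW.
have hpos : forall s' a, 0 < pi' s' a.
  by move=> s' a; rewrite /pi'; case: eqP.
have := hmin _ hpol hpos; rewrite /loss ler_pM2l ?invr_gt0 //.
rewrite (bigD1 s) //= [X in _ <= X](bigD1 s) //=.
have Erest : \sum_(s' | s' != s) nuS s' * \sum_a nuA s' a *
    (beta^-1 * Adv term f r piref s' a - ln (pi' s' a / piref s' a)) ^+ 2 =
  \sum_(s' | s' != s) nuS s' * \sum_a nuA s' a *
    (beta^-1 * Adv term f r piref s' a - ln (piplus s' a / piref s' a)) ^+ 2.
  by apply: eq_bigr => s' /negbTE ns; rewrite /pi' ns.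
rewrite Erest lerD2r ler_pM2l // /pi' eqxx.
by [].
Qed.

Lemma hcore s : ~~ term s -> forall b,
  piplus s b <= piref s b * expR (beta^-1 * Ad s b).
Proof.
move=> ht.
exact: (@core _ _ (nuA s) (piref s) (piplus s)
   (fun a => beta^-1 * Ad s a) (hnuA_pos s) (hpref_pos s) (hplus_pos s)
   (hplus s).2 (sumexp s ht) (@hloc s)).
Qed.

Lemma hterm s b : ~~ term s -> beta * ln (piplus s b / piref s b) <= Ad s b.
Proof.
move=> ht; have H := hcore s ht b.
have H1 : piplus s b / piref s b <= expR (beta^-1 * Ad s b).
  by rewrite ler_pdivrMr // mulrC.
have -> : Ad s b = beta * (beta^-1 * Ad s b).
  by rewrite mulrA divff ?mul1r // gt_eqF.
rewrite ler_pM2l // -[X in _ <= X]expRK ler_ln ?posrE ?divr_gt0 ?expR_gt0 //.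
Qed.

Lemma cc_ge0 s : ~~ term s -> 0 <= cc s.
Proof.
move=> ht; apply: sumr_ge0 => a _.
apply: mulr_ge0; [exact: ltW | rewrite subr_ge0; exact: hterm].
Qed.

Lemma lam_ge0 s p : 0 <= lam s p.
Proof. by rewrite /lam; case: ifP => // /negbT /cc_ge0. Qed.

Lemma PD n s : (hh S rank s <= n)%N ->
  traj_sum term f gp piplus n s - V0 s = traj_sum term f gl piplus n s.
Proof.
elim: n s => [|n IH] s hn.
  by have := hh_pos S rank s; rewrite leqn0 in hn; rewrite (eqP hn).
rewrite /=; case: ifP => ht; first by rewrite V0_term // subrr.
have ht' : ~~ term s by rewrite ht.
have -> : gl s = fun _ => cc s by rewrite /gl /lam ht.
rewrite [RHS](eq_bigr (fun a => piplus s a * (cc s + (traj_sum term f gp piplus n (f s a) - V0 (f s a))))); last first.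
  move=> a _; rewrite IH //.
  by rewrite -ltnS (leq_trans (hh_dec _ _ _ _ _ hrank s a ht')).
have s1 := (hplus s).2.
have e1 : \sum_a piplus s a * (gp s a + traj_sum term f gp piplus n (f s a)) =
   \sum_a piplus s a * gp s a + \sum_a piplus s a * traj_sum term f gp piplus n (f s a).
  by rewrite -big_split; apply: eq_bigr => a _; rewrite mulrDr.
have e2 : \sum_a piplus s a * (cc s + (traj_sum term f gp piplus n (f s a) - V0 (f s a))) =
   \sum_a piplus s a * cc s + \sum_a piplus s a * traj_sum term f gp piplus n (f s a)
   - \sum_a piplus s a * V0 (f s a).
  by rewrite -big_split -sumrB; apply: eq_bigr => a _ /=; ring.
have e3 : cc s = \sum_a piplus s a * gp s a + \sum_a piplus s a * V0 (f s a)
   - \sum_a piplus s a * V0 s.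
  by rewrite -big_split -sumrB; apply: eq_bigr => a _ /=; rewrite /Ad /Adv /Qf /gp -/V0; ring.
have e4 : \sum_a piplus s a * V0 s = V0 s by rewrite -big_distrl /= s1 mul1r.
have e5 : \sum_a piplus s a * cc s = cc s by rewrite -big_distrl /= s1 mul1r.
rewrite e1 e2; lra.
Qed.


Lemma opt_dir (pi' : S -> A -> R) : is_policy pi' -> forall n s,
  (hh S rank s <= n)%N -> traj_sum term f gl piplus n s = 0 ->
  traj_sum term f (fun s a => r s a - beta * ln (pi' s a / piref s a)) pi' n s <= V0 s.
Proof.
move=> hpi; elim => [|n IH] s hn.
  by have := hh_pos S rank s; rewrite leqn0 in hn; rewrite (eqP hn).
rewrite /=; case: ifP => ht H0; first by rewrite V0_term.
have ht' : ~~ term s by rewrite ht.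
have s1 := (hplus s).2.
have gnn : forall s a, 0 <= gl s a by move=> s0 a; exact: lam_ge0.
have pnn : forall s a, 0 <= piplus s a by move=> s0 a; exact: ltW.
have Tnn : forall a, 0 <= piplus s a * traj_sum term f gl piplus n (f s a).
  by move=> a; rewrite mulr_ge0 // traj_ge0.
have e1 : \sum_a piplus s a * (gl s a + traj_sum term f gl piplus n (f s a)) =
   cc s + \sum_a piplus s a * traj_sum term f gl piplus n (f s a).
  rewrite -[cc s]mul1r -s1 big_distrl /= -big_split; apply: eq_bigr => a _ /=.
  by rewrite /gl /lam ht mulrDr mulrC.
rewrite e1 in H0; move/eqP: H0; rewrite paddr_eq0 ?cc_ge0 ?sumr_ge0 //.
case/andP => /eqP c0 /eqP T0.
have Tz : forall a, traj_sum term f gl piplus n (f s a) = 0.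
  move=> a; have := psumr_eq0P (fun a _ => Tnn a) T0 (i := a) isT.
  by move/eqP; rewrite mulf_eq0 gt_eqF //= => /eqP.
have Az : forall a, Ad s a = beta * ln (piplus s a / piref s a).
  move=> a.
  have hnn : forall a, true -> 0 <= piplus s a * (Ad s a - beta * ln (piplus s a / piref s a)).
    by move=> b _; apply: mulr_ge0; [exact: ltW | rewrite subr_ge0; exact: hterm].
  have := psumr_eq0P hnn c0 (i := a) isT.
  by move/eqP; rewrite mulf_eq0 gt_eqF //= subr_eq0 => /eqP.
have hpa a : 0 <= pi' s a by exact: (hpi s).1.
apply: (@le_trans _ _ (\sum_a (pi' s a * V0 s + beta * (piplus s a - pi' s a)))).
  apply: ler_sum => a _.
  have hn' : (hh S rank (f s a) <= n)%N.
    by rewrite -ltnS (leq_trans (hh_dec _ _ _ _ _ hrank s a ht') hn).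
  have hT' := IH (f s a) hn' (Tz a).
  have hA : r s a + V0 (f s a) = V0 s + beta * ln (piplus s a / piref s a).
    by rewrite -Az /Ad /Adv /Qf -/V0; ring.
  have hg := gibbs _ _ _ _ (hpa a) (hplus_pos s a) (hpref_pos s a).
  have hg' := ler_wpM2l (ltW hbeta) hg.
  apply: (@le_trans _ _ (pi' s a * (r s a - beta * ln (pi' s a / piref s a) + V0 (f s a)))).
    by rewrite ler_wpM2l // lerD2l.
  have -> : pi' s a * (r s a - beta * ln (pi' s a / piref s a) + V0 (f s a)) =
     pi' s a * ((r s a + V0 (f s a)) - beta * ln (pi' s a / piref s a)) by ring.
  rewrite hA.
  have -> : pi' s a * (V0 s + beta * ln (piplus s a / piref s a) - beta * ln (pi' s a / piref s a))
     = pi' s a * V0 s + beta * (pi' s a * (ln (piplus s a / piref s a) - ln (pi' s a / piref s a))) by ring.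
  by rewrite lerD2l.
rewrite big_split /= -big_distrl /= -mulr_sumr sumrB s1 (hpi s).2 subrr mulr0 addr0 mul1r.
by [].
Qed.

Lemma Vreg_ref s : Vreg term f r beta piref piref s = V0 s.
Proof.
rewrite /Vreg /V0 /V; congr traj_sum; apply: funext => s'; apply: funext => a.
by rewrite divff ?gt_eqF // ln1 mulr0 subr0.
Qed.

Lemma main_sec : exists lambda : S -> (A -> R) -> R,
    (forall s p, is_dist p -> 0 <= lambda s p) /\
    let gap := Vreg_mu term f r beta piref piplus mu
               - Vreg_mu term f r beta piref piref mu in
    let E := occ_exp term f piplus mu (fun s => lambda s (nuA s)) in
    gap >= E /\ E >= 0 /\
    ((gap = E /\ E = 0) <-> is_optimal term f r beta piref mu piref).
Proof.
exists lam; split; first by move=> s p _; exact: lam_ge0.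
have hE : occ_exp term f piplus mu (fun s => lam s (nuA s)) =
   \sum_s mu s * traj_sum term f gl piplus (horizon S) s by [].
have hgap : Vreg_mu term f r beta piref piplus mu - Vreg_mu term f r beta piref piref mu
   = \sum_s mu s * traj_sum term f gl piplus (horizon S) s.
  rewrite /Vreg_mu -sumrB; apply: eq_bigr => s _.
  rewrite -mulrBr -PD ?hh_le // Vreg_ref //.
have Enn : 0 <= \sum_s mu s * traj_sum term f gl piplus (horizon S) s.
  apply: sumr_ge0 => s _; apply: mulr_ge0; first exact: hmu.1.
  by apply: traj_ge0 => s0 a; [exact: lam_ge0 | exact: ltW].
move=> gap E.
have eq : gap = E by rewrite /gap /E hgap hE.
have E0 : 0 <= E by rewrite /E hE.
split; first by rewrite eq.
split; first exact: E0.
split.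
  move=> [_ Ez]; split; first exact: hpref.
  move=> pi' hpi'; rewrite /Vreg_mu; apply: ler_sum => s _.
  rewrite Vreg_ref.
  have hnn : forall s, true -> 0 <= mu s * traj_sum term f gl piplus (horizon S) s.
    move=> s0 _; apply: mulr_ge0; first exact: hmu.1.
    by apply: traj_ge0 => s1 a; [exact: lam_ge0 | exact: ltW].
  rewrite /E hE in Ez.
  have := psumr_eq0P hnn Ez (i := s) isT.
  case: (eqVneq (mu s) 0) => [->|mu0]; first by rewrite !mul0r.
  move/eqP; rewrite mulf_eq0 (negbTE mu0) /= => /eqP T0.
  apply: ler_wpM2l; first exact: hmu.1.
  exact: (opt_dir _ hpi' _ _ (hh_le S rank s) T0).
move=> [_ Hopt]; have := Hopt piplus hplus => H.
have : gap <= 0 by rewrite /gap; lra.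
by rewrite eq => Hle; split => //; lra.
Qed.

End Main.

Theorem mainTheorem2 (R : realType) (S A : finType)
  (term : pred S) (f : S -> A -> S) (r : S -> A -> R)
  (mu : S -> R) (beta : R) (piref nuA piplus : S -> A -> R) (nuS : S -> R) :
  (* episodes terminate: a rank strictly decreasing along non-terminal transitions *)
  (exists rank : S -> nat, forall s a, ~~ term s -> (rank (f s a) < rank s)%N) ->
  (* reward is nonzero only on reaching a terminal state *)
  (forall s a, r s a != 0 -> term (f s a)) ->
  is_dist mu ->
  0 < beta ->
  is_policy piref -> (forall s a, 0 < piref s a) ->
  is_dist nuS -> (forall s, 0 < nuS s) ->
  (forall s, is_dist (nuA s)) -> (forall s a, 0 < nuA s a) ->
  (* pi^+ solves the regression problem over all policies (the objective is
     +oo unless pi has full support) *)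
  is_policy piplus -> (forall s a, 0 < piplus s a) ->
  (forall pi, is_policy pi -> (forall s a, 0 < pi s a) ->
     loss term f r beta piref nuS nuA piplus <= loss term f r beta piref nuS nuA pi) ->
  exists lambda : S -> (A -> R) -> R,
    (forall s p, is_dist p -> 0 <= lambda s p) /\
    let gap := Vreg_mu term f r beta piref piplus mu
               - Vreg_mu term f r beta piref piref mu in
    let E := occ_exp term f piplus mu (fun s => lambda s (nuA s)) in
    gap >= E /\ E >= 0 /\
    ((gap = E /\ E = 0) <-> is_optimal term f r beta piref mu piref).
Proof.
move=> [rank hrank] _ hmu hbeta hpref hpref_pos _ hnuS_pos _ hnuA_pos hplus hplus_pos hmin.
have H := (main_sec _ _ _ _ _ _ _ _ _ _ _ _ _ hrank hmu hbeta hpref hpref_pos hnuS_pos hnuA_pos hplus hplus_pos hmin).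
exact H.
Qed.
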